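(* Let $0\le k<m\le n-1$. Let $U$ be an $(m+1)$-block of $\Lambda_N^n$, let $U_1,U_2\subset U$ be two disjoint $m$-blocks, and let $U_1'\subset U_1$ and $U_2'\subset U_2$ be $k$-blocks. Let $\sigma\in\{-1,+1\}^{\Lambda_N^n}$, let $\varphi:U_1'\to U_2'$ be a bijection with $d(\varphi(x),\varphi(y))=d(x,y)$, and define $\sigma'$ by $\sigma'(v)=\sigma(v)$ for $v\notin U_1'\cup U_2'$, $\sigma'(v)=\sigma(\varphi(v))$ for $v\in U_1'$, $\sigma'(v)=\sigma(\varphi^{-1}(v))$ for $v\in U_2'$. For $k+1\le i\le m$ let $A_i=\{x\in U_1:\sigma(x)=-1,\ d(x,U_1')=i\}$ and $C_i=\{x\in U_2:\sigma(x)=-1,\ d(x,U_2')=i\}$. Then $$\mathcal H(\sigma')-\mathcal H(\sigma)=\sum_{i=k+1}^m2\,(J_i-J_{m+1})\,\big(|A_i|-|C_i|\big)\,\big(|U_2'\cap\sigma|-|U_1'\cap\sigma|\big),$$ where $|U_j'\cap\sigma|$ is the number of $v\in U_j'$ with $\sigma(v)=+1$.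
   Context: Hierarchical lattice $\Lambda_N^n=\{1,\dots,N^n\}$ ($N\ge2$); for $0\le k\le n$ the $k$-blocks are the sets $\{jN^k+1,\dots,(j+1)N^k\}$, $0\le j<N^{n-k}$; $d(a,b)$ is the smallest $k\ge0$ such that $a,b$ lie in a common $k$-block. For $x\notin U_1'$ with $x\in U_1$, all $v\in U_1'$ have the same distance to $x$, denoted $d(x,U_1')$ (similarly for $U_2'$). Hamiltonian with $h>0$, $J_1,\dots,J_n>0$: $\mathcal H(\sigma)=-\frac12\sum_{\{v,w\},v\ne w}J_{d(v,w)}\sigma(v)\sigma(w)-\frac h2\sum_v\sigma(v)$, the first sum over unordered pairs of distinct vertices. *)

(* Defs.v *)
From HB Require Import structures.
From mathcomp Require Import all_boot all_order all_algebra.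
Set Implicit Arguments. Unset Strict Implicit. Unset Printing Implicit Defensive.
Import Order.TTheory GRing.Theory Num.Theory.

(* Vertices of Lambda_N^n = {1,...,N^n} are encoded 0-based as 'I_(N^n):
   the ordinal v stands for the vertex v+1.  The k-block
   {jN^k+1, ..., (j+1)N^k} then becomes {v | v %/ N^k = j}. *)

(* d(a,b): smallest k >= 0 with a, b in a common k-block
   (for a, b < N^n, k = n always works, so searching 0..n suffices). *)
Definition dist (N n : nat) (a b : nat) : nat :=
  find (fun k => a %/ N ^ k == b %/ N ^ k) (iota 0 n.+1).

Definition block (N n k j : nat) : {set 'I_(N ^ n)} :=
  [set v : 'I_(N ^ n) | v %/ N ^ k == j].

Definition is_block (N n k : nat) (B : {set 'I_(N ^ n)}) : Prop :=
  (k <= n)%N /\ exists2 j, (j < N ^ (n - k))%N & B = block N n k j.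

Arguments is_block : clear implicits.
Local Open Scope ring_scope.

Definition ham (R : realFieldType) (N n : nat) (J : nat -> R) (h : R)
  (s : 'I_(N ^ n) -> R) : R :=
  - (1 / 2) * (\sum_(v : 'I_(N ^ n)) \sum_(w : 'I_(N ^ n) | (val v < val w)%N)
                  J (dist N n v w) * s v * s w)
  - h / 2 * (\sum_(v : 'I_(N ^ n)) s v).

(* A_i (resp. C_i): x in U1 with sigma(x) = -1 and d(x, U1') = i.
   Used only for i > k, where x in U1' is automatically excluded and for
   x outside U1' all v in U1' are at the same distance from x. *)
Definition minus_at_dist (R : realFieldType) (N n : nat) (s : 'I_(N ^ n) -> R)
  (U1 U1' : {set 'I_(N ^ n)}) (i : nat) : {set 'I_(N ^ n)} :=
  [set x in U1 | (s x == -1) && [forall v in U1', dist N n x v == i]].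

Definition plus_count (R : realFieldType) (N n : nat) (s : 'I_(N ^ n) -> R)
  (U' : {set 'I_(N ^ n)}) : nat :=
  #|[set v in U' | s v == 1]|.

(* Main.v *)
Require Import Defs.
From HB Require Import structures.
From mathcomp Require Import all_boot all_order all_algebra.
From mathcomp Require Import zify ring lra.
Import Order.TTheory GRing.Theory Num.Theory.

Lemma divn_expn_mono (N a b i i' : nat) : i <= i' ->
  a %/ N ^ i = b %/ N ^ i -> a %/ N ^ i' = b %/ N ^ i'.
Proof. by move=> le e; rewrite -(subnKC le) expnD !divnMA e. Qed.
Arguments divn_expn_mono {N a b i i'}.

Lemma dist_le (N n a b i : nat) : 0 < N -> a < N ^ n -> b < N ^ n ->
  (dist N n a b <= i) = (a %/ N ^ i == b %/ N ^ i).
Proof.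
move=> N0 an bn.
pose P := fun k => a %/ N ^ k == b %/ N ^ k.
have -> : dist N n a b = find P (iota 0 n.+1) by [].
have Pn : P n by rewrite /P !divn_small.
have hasP : has P (iota 0 n.+1).
  by apply/hasP; exists n => //; rewrite mem_iota; lia.
have fl : find P (iota 0 n.+1) < n.+1 by rewrite -[n.+1 in X in _ < X](size_iota 0) -has_find.
have Pd : P (find P (iota 0 n.+1)).
  by have := nth_find 0 hasP; rewrite nth_iota.
apply/idP/idP.
- move=> le; apply/eqP; apply: (divn_expn_mono le); exact/eqP.
- move=> Pi; rewrite leqNgt; apply/negP => lt.
  have lti : i < n.+1 by exact: ltn_trans lt fl.
  have := before_find 0 lt; rewrite nth_iota // add0n.
  by rewrite /P in Pi *; rewrite Pi.
Qed.

Lemma dist_sym N n a b : dist N n a b = dist N n b a.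
Proof. by rewrite /dist; apply: eq_find => i; rewrite eq_sym. Qed.

Lemma dist_refl N n a : dist N n a a = 0.
Proof. by rewrite /dist /= eqxx. Qed.

Lemma dist_far (N n l x u u' : nat) : 0 < N -> x < N ^ n -> u < N ^ n -> u' < N ^ n ->
  u %/ N ^ l = u' %/ N ^ l -> x %/ N ^ l != u %/ N ^ l ->
  dist N n x u = dist N n x u'.
Proof.
move=> N0 xn un un' e ne.
have key : forall p p', p < N ^ n -> p' < N ^ n -> p %/ N ^ l = p' %/ N ^ l ->
    x %/ N ^ l != p %/ N ^ l -> dist N n x p <= dist N n x p'.
  move=> p p' hp hp' ep nep.
  set d := dist N n x p'.
  have Pd : x %/ N ^ d == p' %/ N ^ d by rewrite -(@dist_le N n x p' d N0 xn hp').
  have ld : l <= d.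
    rewrite leqNgt; apply/negP => lt.
    have : x %/ N ^ l = p' %/ N ^ l.
      apply: (divn_expn_mono (ltnW lt)); exact/eqP.
    by rewrite -ep => h; rewrite h eqxx in nep.
  rewrite dist_le // (eqP Pd); apply/eqP; symmetry; exact: divn_expn_mono ld ep.
apply/eqP; rewrite eqn_leq key //= key //; first by rewrite -e.
Qed.

Lemma card_divq (M D q : nat) : 0 < D -> q * D + D <= M ->
  #|[set v : 'I_M | v %/ D == q]| = D.
Proof.
move=> D0 le.
rewrite -sum1_card (big_mkcond (fun i => i \in _)) /=.
under eq_bigr do rewrite in_set.
rewrite -(big_mkord xpredT (fun i => if i %/ D == q then 1 else 0)).
rewrite (@big_cat_nat _ _ _ (q * D) 0 M) //=; last by apply: leq_trans le; rewrite leq_addr.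
rewrite (@big_cat_nat _ _ _ (q * D + D) (q * D) M) //=; last by rewrite leq_addr.
rewrite big_nat_cond big1 ?add0n; last first.
  by move=> i /andP[/andP[_ hi] _]; rewrite ifN // neq_ltn ltn_divLR // hi.
rewrite [X in _ + X = _]big_nat_cond [X in _ + X = _]big1 ?addn0; last first.
  move=> i /andP[/andP[hi _] _]; rewrite ifN // neq_ltn.
  by rewrite (_ : q < i %/ D) ?orbT // leq_divRL // mulSn addnC.
rewrite (big_addn 0 _ (q * D)) addKn big_nat_cond (eq_bigr (fun=> 1)); last first.
  by move=> i /andP[/andP[_ hi] _]; rewrite addnC divnMDl // divn_small // addn0 eqxx.
by rewrite -big_nat_cond sum_nat_const_nat subn0 muln1.
Qed.

Lemma card_block_q (N n i q : nat) : 0 < N -> i <= n -> q < N ^ (n - i) ->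
  #|[set v : 'I_(N ^ n) | v %/ N ^ i == q]| = N ^ i.
Proof.
move=> N0 le lt; apply: card_divq; first by rewrite expn_gt0 N0.
rewrite -mulSnr -[X in _ <= N ^ X](subnK le) expnD leq_mul2r lt orbT //.
Qed.

Lemma card_ball (N n : nat) (a : 'I_(N ^ n)) i : 0 < N -> i <= n ->
  #|[set v : 'I_(N ^ n) | dist N n v a <= i]| = N ^ i.
Proof.
move=> N0 le.
have -> : [set v : 'I_(N ^ n) | dist N n v a <= i] = [set v : 'I_(N ^ n) | v %/ N ^ i == a %/ N ^ i].
  by apply/setP => v; rewrite !in_set dist_le.
apply: card_block_q => //.
by rewrite ltn_divLR ?expn_gt0 ?N0 // -expnD subnK.
Qed.

Lemma card_sphere (N n : nat) (a b : 'I_(N ^ n)) i : 0 < N -> 0 < i <= n ->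
  #|[set v : 'I_(N ^ n) | dist N n v a == i]| = #|[set v : 'I_(N ^ n) | dist N n v b == i]|.
Proof.
move=> N0 /andP[i0 le].
have dec : forall c : 'I_(N ^ n),
    N ^ i = N ^ i.-1 + #|[set v : 'I_(N ^ n) | dist N n v c == i]|.
  move=> c; rewrite -(card_ball _ _ c _ N0 le) -(card_ball _ _ c _ N0 (leq_trans (leq_pred i) le)).
  rewrite -(cardsID [set v : 'I_(N ^ n) | dist N n v c <= i.-1]).
  congr (_ + _); apply: eq_card => v; rewrite !inE.
    by apply/idP/idP => H; lia.
    by apply/idP/idP => H; lia.
by apply/eqP; rewrite -(eqn_add2l (N ^ i.-1)) -!dec.
Qed.

Local Open Scope ring_scope.

Lemma pair_sum (R : realFieldType) M (f : 'I_M -> 'I_M -> R) :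
  (forall v w, f v w = f w v) ->
  \sum_v \sum_w f v w =
  2 * (\sum_v \sum_(w | (val v < val w)%N) f v w) + \sum_v f v v.
Proof.
move=> fs.
have sp v : \sum_w f v w = \sum_(w | (val v < val w)%N) f v w
     + \sum_(w | (val w < val v)%N) f v w + f v v.
  rewrite (bigD1 v) //= (bigID (fun w => (val v < val w)%N)) /=.
  rewrite addrC; congr (_ + _ + _); apply: eq_bigl => w; rewrite -(inj_eq val_inj) /=.
    by case: (ltngtP (val v) (val w)) => h; rewrite ?andbT ?andbF //; lia.
  by case: (ltngtP (val v) (val w)) => h; rewrite ?andbT ?andbF //=; lia.
have ex : \sum_v \sum_(w | (val w < val v)%N) f v w
        = \sum_v \sum_(w | (val v < val w)%N) f v w.
  under eq_bigr do rewrite big_mkcond.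
  rewrite exchange_big /=; apply: eq_bigr => v _.
  by rewrite [RHS]big_mkcond; apply: eq_bigr => w _; rewrite fs.
under eq_bigr do rewrite sp.
by rewrite !big_split /= ex mulr2n mulrDl mul1r.
Qed.

Lemma sum_sym2 (R : realFieldType) M (x y : 'I_M -> R) :
  \sum_v \sum_w (x v * y w + x w * y v) = 2 * ((\sum_v x v) * (\sum_w y w)).
Proof.
have e : forall x' y' : 'I_M -> R,
    \sum_v \sum_w x' v * y' w = (\sum_v x' v) * (\sum_w y' w).
  by move=> x' y'; rewrite mulr_suml; apply: eq_bigr => v _; rewrite mulr_sumr.
under eq_bigr do rewrite big_split /=.
rewrite big_split /= [X in _ + X]exchange_big /=.
rewrite e.
by rewrite mulr2n mulrDl mul1r.
Qed.

Lemma sum_nat_eq (R : realFieldType) (a b d : nat) (G : R) :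
  \sum_(a <= i < b) (if d == i then G else 0) = if (a <= d < b)%N then G else 0.
Proof.
case: ifP => h.
  rewrite (bigD1_seq d) ?iota_uniq ?mem_index_iota //= eqxx big1 ?addr0 //.
  by move=> i /negbTE; rewrite eq_sym => ->.
rewrite big1_seq // => i /andP[_]; rewrite mem_index_iota => hi.
by case: eqP => // e; rewrite e hi in h.
Qed.

Lemma card_R (R : realFieldType) (T : finType) (A : {set T}) :
  (#|A|%:R : R) = \sum_(v in A) 1.
Proof. by rewrite sumr_const. Qed.

Lemma sum_in_set (R : realFieldType) (T : finType) (P : pred T) (F : T -> R) :
  \sum_(v in [set v | P v]) F v = \sum_(v | P v) F v.
Proof. by apply: eq_bigl => v; rewrite in_set. Qed.

Lemma sum_pm2 (R : realFieldType) M (s : 'I_M -> R) (Q : pred 'I_M) :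
  (forall v, s v = 1 \/ s v = -1) ->
  \sum_(v | Q v) s v =
  2 * (#|[set v | Q v && (s v == 1)]|%:R) - #|[set v | Q v]|%:R.
Proof.
move=> spm.
rewrite !card_R.
rewrite !sum_in_set.
rewrite (bigID (fun v => s v == 1) Q) /= [X in _ = _ - X](bigID (fun v => s v == 1) Q) /=.
have -> : \sum_(i | Q i && (s i == 1)) s i = \sum_(i | Q i && (s i == 1)) 1.
  by apply: eq_bigr => i /andP[_ /eqP].
have -> : \sum_(i | Q i && ~~ (s i == 1)) s i = - \sum_(i | Q i && ~~ (s i == 1)) 1.
  rewrite -sumrN; apply: eq_bigr => i /andP[_ h].
  by case: (spm i) h => ->; rewrite ?eqxx.
set X := \sum_(i | _) _; set Y := \sum_(i | _) _.
rewrite mulr2n mulrDl mul1r; lra.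
Qed.

Lemma sum_pm (R : realFieldType) M (s : 'I_M -> R) (Q : pred 'I_M) :
  (forall v, s v = 1 \/ s v = -1) ->
  \sum_(v | Q v) s v =
  #|[set v | Q v]|%:R - 2 * (#|[set v | Q v && (s v == -1)]|%:R).
Proof.
move=> spm.
have -> : \sum_(v | Q v) s v = - \sum_(v | Q v) (- s v) by rewrite sumrN opprK.
rewrite (@sum_pm2 R M (fun v => - s v)); last first.
  by move=> v; case: (spm v) => ->; [right|left]; rewrite ?opprK.
have -> : [set v | Q v && (- s v == 1)] = [set v | Q v && (s v == -1)].
  by apply/setP => v; rewrite !in_set -eqr_oppLR.
lra.
Qed.

Theorem lemma2p1 (R : realFieldType) (N n k m : nat) (J : nat -> R) (h : R)
  (U U1 U2 U1' U2' : {set 'I_(N ^ n)})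
  (sigma sigma' : 'I_(N ^ n) -> R) (phi psi : 'I_(N ^ n) -> 'I_(N ^ n)) :
  (2 <= N)%N ->
  0 < h ->
  (forall i, (1 <= i <= n)%N -> 0 < J i) ->
  (k < m)%N -> (m <= n - 1)%N ->
  is_block N n m.+1 U ->
  is_block N n m U1 -> is_block N n m U2 ->
  U1 \subset U -> U2 \subset U -> [disjoint U1 & U2] ->
  is_block N n k U1' -> is_block N n k U2' ->
  U1' \subset U1 -> U2' \subset U2 ->
  (forall v, sigma v = 1 \/ sigma v = -1) ->
  (* phi : U1' -> U2' is a bijection with inverse psi : U2' -> U1' *)
  {in U1', forall x, phi x \in U2'} ->
  {in U2', forall y, psi y \in U1'} ->
  {in U1', cancel phi psi} ->
  {in U2', cancel psi phi} ->
  (* phi preserves the hierarchical distance *)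
  {in U1' &, forall x y, dist N n (phi x) (phi y) = dist N n x y} ->
  (* definition of sigma' *)
  (forall v, v \notin U1' :|: U2' -> sigma' v = sigma v) ->
  {in U1', forall v, sigma' v = sigma (phi v)} ->
  {in U2', forall v, sigma' v = sigma (psi v)} ->
  ham J h sigma' - ham J h sigma =
  \sum_(k.+1 <= i < m.+1)
     2 * (J i - J m.+1)
       * ((#|minus_at_dist sigma U1 U1' i|)%:R - (#|minus_at_dist sigma U2 U2' i|)%:R)
       * ((plus_count sigma U2')%:R - (plus_count sigma U1')%:R).
Proof.
move=> N2 _ _ km mn [mU [j jlt eU]] [_ [j1 j1lt eU1]] [_ [j2 j2lt eU2]] sU1 sU2 dU12
  [kn [j1' j1'lt eU1']] [_ [j2' j2'lt eU2']] s1 s2 spm phiin psiin phiK psiK phid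
  s'out s'1 s'2.
have N0 : (0 < N)%N by lia.
have dl : forall (x y : 'I_(N ^ n)) i,
    (dist N n x y <= i)%N = (x %/ N ^ i == y %/ N ^ i)%N.
  by move=> x y i; apply: dist_le.
have inU x : (x \in U) = (x %/ N ^ m.+1 == j)%N by rewrite eU in_set.
have inU1 x : (x \in U1) = (x %/ N ^ m == j1)%N by rewrite eU1 in_set.
have inU2 x : (x \in U2) = (x %/ N ^ m == j2)%N by rewrite eU2 in_set.
have inU1' x : (x \in U1') = (x %/ N ^ k == j1')%N by rewrite eU1' in_set.
have inU2' x : (x \in U2') = (x %/ N ^ k == j2')%N by rewrite eU2' in_set.
have mkpt : forall j0 l, (l <= n)%N -> (j0 < N ^ (n - l))%N ->
    exists a : 'I_(N ^ n), (a %/ N ^ l == j0)%N.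
  move=> j0 l ln jl.
  have lt : (j0 * N ^ l < N ^ n)%N.
    by rewrite -[X in (_ < N ^ X)%N](subnK ln) expnD ltn_pmul2r // expn_gt0 N0.
  by exists (Ordinal lt) => /=; rewrite mulnK // expn_gt0 N0.
have [a1 a1in] : exists a, a \in U1'.
  by have [a ha] := mkpt j1' k kn j1'lt; exists a; rewrite inU1'.
have [b1 b1in] : exists a, a \in U2'.
  by have [a ha] := mkpt j2' k kn j2'lt; exists a; rewrite inU2'.
have d12 x : x \in U1' -> (x \in U2') = false.
  move=> hx; apply/negbTE/negP => hx2.
  by have := disjointFr dU12 (subsetP s1 _ hx); rewrite (subsetP s2 _ hx2).
have d21 x : x \in U2' -> (x \in U1') = false.
  by move=> hx; apply/negbTE/negP => hx1; rewrite d12 in hx.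
have outB : forall (B : {set 'I_(N ^ n)}) jB (v a : 'I_(N ^ n)),
    (forall x, (x \in B) = (x %/ N ^ m == jB)%N) -> B \subset U ->
    v \in U -> v \notin B -> a \in B -> dist N n v a = m.+1.
  move=> B jB v a inB sB vU vB aB.
  have aU := subsetP sB a aB.
  rewrite inU in vU; rewrite inU in aU.
  apply/eqP; rewrite eqn_leq dl (eqP vU) (eqP aU) eqxx /= ltnNge dl.
  apply/negP => /eqP e; move: vB; rewrite inB e -inB aB //.
have cross : forall x y, x \in U1 -> y \in U2 -> dist N n x y = m.+1.
  move=> x y hx hy; apply: (outB U2 j2) => //.
    exact: subsetP sU1 _ hx.
  by rewrite (disjointFr dU12 hx).
have cross' : forall x y, x \in U2 -> y \in U1 -> dist N n x y = m.+1.
  by move=> x y hx hy; rewrite dist_sym cross.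
have qU1' x : x \in U1' -> (x %/ N ^ k = j1')%N by move=> hx; apply/eqP; rewrite -inU1'.
have qU2' x : x \in U2' -> (x %/ N ^ k = j2')%N by move=> hx; apply/eqP; rewrite -inU2'.
have d1 : forall v w, v \notin U1' -> w \in U1' -> dist N n v w = dist N n v a1.
  move=> v w hv hw; apply: (@dist_far N n k) => //.
    by rewrite (qU1' w hw) (qU1' a1 a1in).
  by rewrite (qU1' w hw) -inU1'.
have d2 : forall v w, v \notin U2' -> w \in U2' -> dist N n v w = dist N n v b1.
  move=> v w hv hw; apply: (@dist_far N n k) => //.
    by rewrite (qU2' w hw) (qU2' b1 b1in).
  by rewrite (qU2' w hw) -inU2'.
have a1U : a1 \in U by apply: (subsetP sU1); apply: (subsetP s1).
have b1U : b1 \in U by apply: (subsetP sU2); apply: (subsetP s2).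
have dfar : forall v, v \notin U -> dist N n v a1 = dist N n v b1.
  move=> v hv; apply: (@dist_far N n m.+1) => //.
    by move: a1U b1U; rewrite !inU => /eqP -> /eqP ->.
  by move: hv a1U; rewrite !inU => hv /eqP ->.
have psid : {in U2' &, forall x y, dist N n (psi x) (psi y) = dist N n x y}.
  move=> x y hx hy.
  by rewrite -[in RHS](psiK x hx) -[in RHS](psiK y hy) phid ?psiin.
pose pi v := if v \in U1' then phi v else if v \in U2' then psi v else v.
have pi1 v : v \in U1' -> pi v = phi v by move=> hv; rewrite /pi hv.
have pi2 v : v \in U2' -> pi v = psi v by move=> hv; rewrite /pi d21 // hv.
have pi0 v : v \notin U1' -> v \notin U2' -> pi v = v.
  by move=> h1 h2; rewrite /pi (negbTE h1) (negbTE h2).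
have piK : cancel pi pi.
  move=> v; case: (boolP (v \in U1')) => v1.
    by rewrite (pi1 v v1) (pi2 _ (phiin v v1)) phiK.
  case: (boolP (v \in U2')) => v2.
    by rewrite (pi2 v v2) (pi1 _ (psiin v v2)) psiK.
  by rewrite !pi0.
have pinj : injective pi := can_inj piK.
have sig' v : sigma' v = sigma (pi v).
  case: (boolP (v \in U1')) => v1; first by rewrite pi1 // s'1.
  case: (boolP (v \in U2')) => v2; first by rewrite pi2 // s'2.
  by rewrite pi0 // s'out // in_setU negb_or v1 v2.
pose G (s : 'I_(N ^ n) -> R) := \sum_(v : 'I_(N ^ n)) \sum_(w : 'I_(N ^ n)) J (dist N n v w) * s v * s w.
pose D (s : 'I_(N ^ n) -> R) := \sum_(v : 'I_(N ^ n)) J (dist N n v v) * s v * s v.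
have hamG : forall s, ham J h s = - (1 / 2) * ((G s - D s) / 2) - h / 2 * \sum_v s v.
  move=> s; rewrite /ham /G /D.
  have fs : forall v w : 'I_(N ^ n), J (dist N n v w) * s v * s w = J (dist N n w v) * s w * s v.
    by move=> v w; rewrite dist_sym mulrAC.
  rewrite (@pair_sum R (N ^ n) (fun v w => J (dist N n v w) * s v * s w) fs) /=.
  by field.
have Ss : \sum_v sigma' v = \sum_v sigma v.
  under eq_bigr do rewrite sig'.
  by rewrite [RHS](reindex_inj pinj).
have Ds : D sigma' = D sigma.
  rewrite /D; under eq_bigr do rewrite sig' dist_refl.
  rewrite [RHS](reindex_inj pinj) /=.
  by apply: eq_bigr => v _; rewrite dist_refl.
have Gs' : G sigma' = \sum_v \sum_w J (dist N n (pi v) (pi w)) * sigma v * sigma w.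
  rewrite /G.
  under eq_bigr do under eq_bigr do rewrite !sig'.
  rewrite (reindex_inj pinj) /=.
  apply: eq_bigr => v _; rewrite (reindex_inj pinj) /=.
  by apply: eq_bigr => w _; rewrite !piK.
pose x (v : 'I_(N ^ n)) := if v \in U1' :|: U2' then 0
   else (J (dist N n v b1) - J (dist N n v a1)) * sigma v.
pose y (w : 'I_(N ^ n)) := (((w \in U1') : nat)%:R - ((w \in U2') : nat)%:R) * sigma w.
have tri : forall v, ((v \in U1') && (v \notin U2')) \/ ((v \notin U1') && (v \in U2'))
    \/ ((v \notin U1') && (v \notin U2')).
  move=> v; case: (boolP (v \in U1')) => v1; first by left; rewrite d12.
  case: (boolP (v \in U2')) => v2; first by right; left.
  by right; right.
have inS1 : forall z, z \in U1' -> z \in U1 := subsetP s1.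
have inS2 : forall z, z \in U2' -> z \in U2 := subsetP s2.
have pw : forall v w, (J (dist N n (pi v) (pi w)) - J (dist N n v w)) * sigma v * sigma w
    = x v * y w + x w * y v.
  move=> v w; rewrite /x /y !in_setU.
  case: (tri v) => [/andP[v1 v2]|[/andP[v1 v2]|/andP[v1 v2]]];
    case: (tri w) => [/andP[w1 w2]|[/andP[w1 w2]|/andP[w1 w2]]].
  { by rewrite (pi1 v v1) (pi1 w w1) phid // v1 w1 (negbTE v2) (negbTE w2) /=; ring. }
  { rewrite v1 w2 (negbTE v2) (negbTE w1) /= (pi1 v v1) (pi2 w w2).
    rewrite (cross' _ _ (inS2 _ (phiin v v1)) (inS1 _ (psiin w w2))).
    by rewrite (cross _ _ (inS1 _ v1) (inS2 _ w2)); ring. }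
  { rewrite (pi1 v v1) (pi0 w w1 w2) (dist_sym _ _ (phi v) w) (d2 w (phi v) w2 (phiin v v1)).
    rewrite (dist_sym _ _ v w) (d1 w v w1 v1).
    by rewrite v1 (negbTE w1) (negbTE v2) (negbTE w2) /=; ring. }
  { rewrite v2 w1 (negbTE v1) (negbTE w2) /= (pi2 v v2) (pi1 w w1).
    rewrite (cross _ _ (inS1 _ (psiin v v2)) (inS2 _ (phiin w w1))).
    by rewrite (cross' _ _ (inS2 _ v2) (inS1 _ w1)); ring. }
  { rewrite (pi2 v v2) (pi2 w w2) psid //.
    by rewrite v2 w2 (negbTE v1) (negbTE w1) /=; ring. }
  { rewrite (pi2 v v2) (pi0 w w1 w2) (dist_sym _ _ (psi v) w) (d1 w (psi v) w1 (psiin v v2)).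
    rewrite (dist_sym _ _ v w) (d2 w v w2 v2).
    by rewrite v2 (negbTE w1) (negbTE v1) (negbTE w2) /=; ring. }
  { rewrite (pi0 v v1 v2) (pi1 w w1) (d2 v (phi w) v2 (phiin w w1)) (d1 v w v1 w1).
    by rewrite w1 (negbTE w2) (negbTE v1) (negbTE v2) /=; ring. }
  { rewrite (pi0 v v1 v2) (pi2 w w2) (d1 v (psi w) v1 (psiin w w2)) (d2 v w v2 w2).
    by rewrite w2 (negbTE w1) (negbTE v1) (negbTE v2) /=; ring. }
  { rewrite (pi0 v v1 v2) (pi0 w w1 w2).
    by rewrite (negbTE w1) (negbTE w2) (negbTE v1) (negbTE v2) /=; ring. }
have dG : G sigma' - G sigma = 2 * ((\sum_v x v) * (\sum_w y w)).
  rewrite -sum_sym2 Gs' /G -sumrB; apply: eq_bigr => v _.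
  rewrite -sumrB; apply: eq_bigr => w _; rewrite -pw; ring.
have T : forall (B B' : {set 'I_(N ^ n)}) (jB jB' : nat) (a : 'I_(N ^ n)),
    (forall x, (x \in B) = (x %/ N ^ m == jB)%N) ->
    (forall x, (x \in B') = (x %/ N ^ k == jB')%N) ->
    B' \subset B -> a \in B' ->
    \sum_(v | (v \in B) && (v \notin B')) (J (dist N n v a) - J m.+1) * sigma v =
    \sum_(k.+1 <= i < m.+1) (J i - J m.+1) *
      ((#|[set v | (v \in B) && (dist N n v a == i)]|)%:R
        - 2 * (#|minus_at_dist sigma B B' i|)%:R).
  move=> B B' jB jB' a inB inB' sB' aB'.
  have aB := subsetP sB' a aB'.
  have qB z : z \in B -> (z %/ N ^ m = jB)%N by move=> hz; apply/eqP; rewrite -inB.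
  have qB' z : z \in B' -> (z %/ N ^ k = jB')%N by move=> hz; apply/eqP; rewrite -inB'.
  have Ai : forall i, (k < i)%N ->
      ((#|[set v | (v \in B) && (dist N n v a == i)]|)%:R
        - 2 * (#|minus_at_dist sigma B B' i|)%:R : R)
      = \sum_(v | (v \in B) && (dist N n v a == i)) sigma v.
    move=> i ki; rewrite (@sum_pm R _ sigma (fun v => (v \in B) && (dist N n v a == i)) spm) /=.
    congr (_ - 2 * _%:R); apply: eq_card => v; rewrite /minus_at_dist !inE.
    case: (v \in B) => //=; case: (sigma v == -1); rewrite ?andbT ?andbF //=.
    apply/idP/idP; first by move/forall_inP => hf; exact: hf a aB'.
    move=> /eqP dva; apply/forall_inP => w wB'.
    have vB' : v \notin B'.
      apply/negP => vB'; move: ki; rewrite -dva ltnNge dl (qB' v vB') (qB' a aB') eqxx //.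
    rewrite (@dist_far N n k v w a) ?dva //.
      by rewrite (qB' w wB') (qB' a aB').
    by rewrite (qB' w wB') -inB'.
  rewrite [RHS]big_nat_cond (eq_bigr (fun i => (J i - J m.+1) *
      \sum_(v | (v \in B) && (dist N n v a == i)) sigma v)); last first.
    by move=> i /andP[/andP[h1 _] _]; rewrite Ai.
  rewrite -big_nat_cond.
  rewrite (eq_bigr (fun i => \sum_v (if (v \in B) && (dist N n v a == i)
      then (J (dist N n v a) - J m.+1) * sigma v else 0))); last first.
    move=> i _; rewrite mulr_sumr big_mkcond; apply: eq_bigr => v _.
    by case: ifP => [/andP[_ /eqP ->]|]; rewrite ?mulr0.
  rewrite exchange_big /= big_mkcond; apply: eq_bigr => v _.
  case vB: (v \in B) => /=; last by rewrite big1.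
  rewrite sum_nat_eq.
  have -> : (dist N n v a < m.+1)%N by rewrite ltnS dl (qB v vB) (qB a aB).
  by rewrite andbT ltnNge dl (qB' a aB') inB'.
have xe : \sum_v x v =
   \sum_(v | (v \in U2) && (v \notin U2')) (J (dist N n v b1) - J m.+1) * sigma v
 - \sum_(v | (v \in U1) && (v \notin U1')) (J (dist N n v a1) - J m.+1) * sigma v.
  rewrite [X in _ = X - _]big_mkcond [X in _ = _ - X]big_mkcond -sumrB; apply: eq_bigr => v _; rewrite /x in_setU.
  case: (tri v) => [/andP[v1 v2]|[/andP[v1 v2]|/andP[v1 v2]]].
  { by rewrite v1 /= andbF (disjointFr dU12 (inS1 _ v1)) /= subrr. }
  { by rewrite v2 orbT /= andbF (disjointFl dU12 (inS2 _ v2)) /= subrr. }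
  rewrite (negbTE v1) (negbTE v2) /= !andbT.
  case: (boolP (v \in U1)) => vU1.
    by rewrite (disjointFr dU12 vU1) (cross v b1 vU1 (inS2 _ b1in)); ring.
  case: (boolP (v \in U2)) => vU2.
    by rewrite (cross' v a1 vU2 (inS1 _ a1in)); ring.
  case: (boolP (v \in U)) => vU.
    rewrite (outB U1 j1 v a1 inU1 sU1 vU vU1 (inS1 _ a1in)).
    by rewrite (outB U2 j2 v b1 inU2 sU2 vU vU2 (inS2 _ b1in)); ring.
  by rewrite (dfar v vU); ring.
have ballB : forall (B : {set 'I_(N ^ n)}) (jB : nat) (a : 'I_(N ^ n)) i,
    (forall x, (x \in B) = (x %/ N ^ m == jB)%N) -> a \in B -> (i <= m)%N ->
    [set v | (v \in B) && (dist N n v a == i)] = [set v : 'I_(N ^ n) | dist N n v a == i].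
  move=> B jB a i inB aB im; apply/setP => v; rewrite !in_set andb_idl // => /eqP di.
  have : (dist N n v a <= m)%N by rewrite di.
  by rewrite dl inB => /eqP ->; rewrite -inB.
have eX : \sum_v x v = 2 * \sum_(k.+1 <= i < m.+1) (J i - J m.+1) *
    ((#|minus_at_dist sigma U1 U1' i|)%:R - (#|minus_at_dist sigma U2 U2' i|)%:R).
  rewrite xe (T U2 U2' j2 j2' b1 inU2 inU2' s2 b1in) (T U1 U1' j1 j1' a1 inU1 inU1' s1 a1in).
  rewrite -sumrB mulr_sumr big_nat_cond [RHS]big_nat_cond.
  apply: eq_bigr => i /andP[/andP[h1 h2] _].
  rewrite (ballB U1 j1 a1 i inU1 (inS1 _ a1in)) // (ballB U2 j2 b1 i inU2 (inS2 _ b1in)) //.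
  rewrite (card_sphere _ _ a1 b1 i N0); last by apply/andP; split; lia.
  ring.
have ye : \sum_w y w = 2 * ((plus_count sigma U1')%:R - (plus_count sigma U2')%:R).
  have e1 : \sum_w y w = \sum_(w | w \in U1') sigma w - \sum_(w | w \in U2') sigma w.
    rewrite [in RHS]big_mkcond [X in _ - X]big_mkcond -sumrB; apply: eq_bigr => w _; rewrite /y.
    by case: (w \in U1'); case: (w \in U2') => /=; ring.
  rewrite e1 !(@sum_pm2 R _ sigma _ spm).
  have c1 : #|[set v | v \in U1']| = (N ^ k)%N.
    rewrite -(card_block_q N n k j1' N0 kn j1'lt); apply: eq_card => v; rewrite !inE inU1' //.
  have c2 : #|[set v | v \in U2']| = (N ^ k)%N.
    rewrite -(card_block_q N n k j2' N0 kn j2'lt); apply: eq_card => v; rewrite !inE inU2' //.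
  rewrite /plus_count c1 c2; ring.
rewrite !hamG Ss Ds.
have eG : G sigma' = G sigma + 2 * ((\sum_v x v) * \sum_w y w) by rewrite -dG addrC subrK.
rewrite eG eX ye.
set Z := \sum_(k.+1 <= i < m.+1) (J i - J m.+1) * _.
have -> : \sum_(k.+1 <= i < m.+1)
     2 * (J i - J m.+1)
       * ((#|minus_at_dist sigma U1 U1' i|)%:R - (#|minus_at_dist sigma U2 U2' i|)%:R)
       * ((plus_count sigma U2')%:R - (plus_count sigma U1')%:R)
   = 2 * ((plus_count sigma U2')%:R - (plus_count sigma U1')%:R) * Z.
  by rewrite /Z mulr_sumr; apply: eq_bigr => i _; ring.
by field.
Qed.
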